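(* Let $k\ge 1$, $t\ge 0$, $n\geq 2k+t$ and $1\leq r \leq n-k-t+1$ be integers. Let $\mathcal{F} \subseteq\binom{[n]}{k+t}$ be shifted with $|\mathcal{F}|\geq r$. If $r \leq n-k-t$, then $|\mathcal{F}(\bar{n})|\geq r$. If $r=n-k-t+1$, then $|\mathcal{F}(\bar{n})|\geq r-1$.
   Context: A family $\mathcal{F}\subseteq 2^{[n]}$ is shifted if for every $F\in\mathcal{F}$ and all $i<j$ with $i\notin F$, $j\in F$, we have $(F\setminus\{j\})\cup\{i\}\in\mathcal{F}$. $\mathcal{F}(\bar n)=\{F\in\mathcal{F}: n\notin F\}$. $\binom{[n]}{m}$ denotes the $m$-subsets of $[n]=\{1,\dots,n\}$. *)

(* Defs.v *)
From mathcomp Require Import all_boot.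
Set Implicit Arguments. Unset Strict Implicit. Unset Printing Implicit Defensive.

(* Ground set [n] = {1,...,n} is modelled by 'I_n = {0,...,n-1}
   (element i : 'I_n stands for i+1; the order is preserved). *)

Definition shifted (n : nat) (FF : {set {set 'I_n}}) : Prop :=
  forall (F : {set 'I_n}) (i j : 'I_n),
    F \in FF -> (i < j)%N -> i \notin F -> j \in F ->
    i |: (F :\ j) \in FF.

Definition avoid_last (n : nat) (FF : {set {set 'I_n}}) : {set {set 'I_n}} :=
  [set F in FF | [forall x in F, (x : nat) != n.-1]].

Definition uniform (n m : nat) (FF : {set {set 'I_n}}) : Prop :=
  forall F, F \in FF -> #|F| = m.

(* Main.v *)
Require Import Defs.
From mathcomp Require Import all_boot.
From mathcomp Require Import zify.

Lemma key (m n : nat) (FF : {set {set 'I_n}}) :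
  uniform m FF -> shifted FF ->
  (#|avoid_last FF| = #|FF|) \/ (n - m <= #|avoid_last FF|).
Proof.
move=> Hu Hs.
case: (boolP [exists F in FF, [exists x in F, (x : nat) == n.-1]]) => [/existsP [F /andP [HF /existsP [x /andP [Hx /eqP Hxv]]]]|Hno]; last first.
  left; suff -> : avoid_last FF = FF by [].
  apply/setP => F; rewrite /avoid_last inE.
  case HF: (F \in FF) => //=; apply/forallP => x; apply/implyP => Hx.
  apply/negP => /eqP Hxv; move/negP: Hno; apply; apply/existsP; exists F.
  by rewrite HF; apply/existsP; exists x; rewrite Hx Hxv eqxx.
right.
set f := fun i : 'I_n => i |: (F :\ x).
have Hinj : {in ~: F &, injective f}.
  move=> i j; rewrite !inE => Hi Hj Heq.
  have : i \in f j by rewrite -Heq /f setU11.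
  rewrite /f !inE => /orP [/eqP //|/andP [_ HiF]].
  by rewrite HiF in Hi.
have Hsub : f @: (~: F) \subset avoid_last FF.
  apply/subsetP => G /imsetP [i]; rewrite inE => Hi ->.
  have Hix : i != x by apply/eqP => E; rewrite E Hx in Hi.
  rewrite inE; apply/andP; split.
    apply: Hs => //; rewrite ltn_neqAle; apply/andP; split.
      by rewrite -(inj_eq val_inj) in Hix.
    by rewrite Hxv; have := ltn_ord i; lia.
  apply/forallP => y; apply/implyP; rewrite /f !inE => /orP [/eqP ->|/andP [Hyx _]].
    by rewrite -Hxv; rewrite (inj_eq val_inj).
  by rewrite -Hxv (inj_eq val_inj).
have := subset_leq_card Hsub.
rewrite (card_in_imset Hinj) cardsCs card_ord setCK (Hu _ HF).
by [].
Qed.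

Theorem lemma2p2 (k t n r : nat) (FF : {set {set 'I_n}}) :
  1 <= k -> 2 * k + t <= n -> 1 <= r -> r <= n - k - t + 1 ->
  uniform (k + t) FF -> shifted FF -> r <= #|FF| ->
  (r <= n - k - t -> r <= #|avoid_last FF|) /\
  (r = n - k - t + 1 -> r - 1 <= #|avoid_last FF|).
Proof.
move=> H1 H2 H3 H4 Hu Hs H5.
case: (@key (k + t) n FF Hu Hs) => H; rewrite ?H; split; lia.
Qed.
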